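(* Let $\gamma\in(0,1)$, $c\in\mathbb{R}$, $\sigma^2>0$, and $\alpha_0\in(0,1]$. Define recursively, for $n\ge2$, $$\alpha_{n-1}=\frac{(1-\gamma)\lambda^{n-1}\sigma^2+\big(1-(1-\gamma)\delta^{n-1}\big)^2c^2}{(1-\gamma)^2\lambda^{n-1}\sigma^2+\big(1-(1-\gamma)\delta^{n-1}\big)^2c^2+\sigma^2},$$ where $\delta^1=\alpha_0$, $\lambda^1=\alpha_0^2$, and for $m>1$, $\delta^m=\alpha_{m-1}+(1-(1-\gamma)\alpha_{m-1})\delta^{m-1}$, $\lambda^m=\alpha_{m-1}^2+(1-(1-\gamma)\alpha_{m-1})^2\lambda^{m-1}$. Then $\lim_{n\to\infty}\alpha_{n-1}=0$.
   Context: The formula for $\alpha_{n-1}$ is the prediction-error-minimizing stepsize for approximate value iteration in a single-state, single-action problem with i.i.d. rewards of mean $c$, variance $\sigma^2$, and discount factor $\gamma$. *)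

(* Defs.v *)
From Stdlib Require Import Reals.
Open Scope R_scope.

(* state g c s2 a0 k = (alpha_k, delta^(k+1), lambda^(k+1)).
   s2 stands for sigma^2. *)
Fixpoint state (g c s2 a0 : R) (k : nat) : R * R * R :=
  match k with
  | O => (a0, a0, a0 ^ 2)
  | S k' =>
      let '(_, d, l) := state g c s2 a0 k' in
      let a := ((1 - g) * l * s2 + (1 - (1 - g) * d) ^ 2 * c ^ 2) /
               ((1 - g) ^ 2 * l * s2 + (1 - (1 - g) * d) ^ 2 * c ^ 2 + s2) in
      (a, a + (1 - (1 - g) * a) * d, a ^ 2 + (1 - (1 - g) * a) ^ 2 * l)
  end.

Definition alpha (g c s2 a0 : R) (k : nat) : R :=
  fst (fst (state g c s2 a0 k)).
Definition delta (g c s2 a0 : R) (m : nat) : R :=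
  snd (fst (state g c s2 a0 (Nat.pred m))).
Definition lam (g c s2 a0 : R) (m : nat) : R :=
  snd (state g c s2 a0 (Nat.pred m)).

(* Main.v *)
Require Import Defs.
From Stdlib Require Import Reals Lra Psatz.
Open Scope R_scope.

Lemma aux_le b X Y s : 0<=b<=1 -> 0<=X -> 0<=Y -> 0<s -> (b*X+Y)*(b*s) <= (b^2*X+Y)*(s+(b^2*X+Y)).
Proof. intros. assert (0 <= (1-b)*Y*s) by (apply Rmult_le_pos; [apply Rmult_le_pos|]; lra).
assert (0 <= (b^2*X+Y)*(b^2*X+Y)) by (apply Rmult_le_pos; nra). nra. Qed.

Lemma ident : forall g c s l d, 0 < (1 - g) ^ 2 * l * s + (1 - (1 - g) * d) ^ 2 * c ^ 2 + s -> let a := ((1 - g) * l * s + (1 - (1 - g) * d) ^ 2 * c ^ 2) / ((1 - g) ^ 2 * l * s + (1 - (1 - g) * d) ^ 2 * c ^ 2 + s) in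
 ((1-g)^2*(a ^ 2 + (1 - (1 - g) * a) ^ 2 * l)*s + (1-(1-g)*(a + (1 - (1 - g) * a) * d))^2*c^2) * (s + ((1-g)^2*l*s + (1-(1-g)*d)^2*c^2))
 = s * ((1-g)^2*l*s + (1-(1-g)*d)^2*c^2) + g^2 * ((1-(1-g)*d)^2*c^2)^2.
intros g c s l d H a. unfold a. field. lra.
Qed.

Lemma step_facts (g c s l d : R) : 0 < g < 1 -> 0 < s -> 0 <= l ->
  let b := 1 - g in
  let P := b^2*l*s + (1-b*d)^2*c^2 in
  let D := (1 - g) ^ 2 * l * s + (1 - (1 - g) * d) ^ 2 * c ^ 2 + s in
  let a := ((1 - g) * l * s + (1 - (1 - g) * d) ^ 2 * c ^ 2) / D in
  let l' := a ^ 2 + (1 - (1 - g) * a) ^ 2 * l in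
  let d' := a + (1 - (1 - g) * a) * d in
  let P' := b^2*l'*s + (1-b*d')^2*c^2 in
  0 <= l' /\ P' * (s + P) = s * P + g^2 * ((1-b*d)^2*c^2)^2 /\
  0 <= a /\ a * (b * s) <= P.
Proof.
  intros Hg Hs Hl b P D a l' d' P'.
  assert (HY : 0 <= (1-b*d)^2*c^2) by (apply Rmult_le_pos; apply pow2_ge_0).
  assert (HX : 0 <= b^2*l*s) by (apply Rmult_le_pos; [apply Rmult_le_pos; [apply pow2_ge_0|lra]|lra]).
  assert (HD : D = s + P) by (unfold D, P, b; ring).
  assert (HDp : 0 < D) by (unfold P in HD; lra).
  assert (HbX : 0 <= (1-g)*l*s) by (apply Rmult_le_pos; [apply Rmult_le_pos|]; lra).
  split; [|split; [|split]].
  - unfold l'. assert (0 <= (1 - (1 - g) * a) ^ 2 * l) by (apply Rmult_le_pos; [apply pow2_ge_0|lra]).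
    assert (0 <= a^2) by apply pow2_ge_0. lra.
  - unfold P', l', d', a, b, P. unfold D in *. apply ident. lra.
  - unfold a. apply Rmult_le_pos; [unfold b in HY; lra | apply Rlt_le, Rinv_0_lt_compat; lra].
  - unfold a. unfold Rdiv. rewrite Rmult_assoc, (Rmult_comm (/D)), <- Rmult_assoc.
    apply (Rmult_le_reg_r D); [lra|]. rewrite Rmult_assoc, Rinv_l by lra. rewrite Rmult_1_r.
    rewrite HD. unfold P, b in *.
    assert (0 <= (1-g)^2*l*s) by (apply Rmult_le_pos; [apply Rmult_le_pos; [apply pow2_ge_0|lra]|lra]).
    replace ((1 - g) * l * s) with ((1-g)*(l*s)) by ring. replace ((1 - g)^2 * l * s) with ((1-g)^2*(l*s)) by ring.
    apply aux_le; try lra. apply Rmult_le_pos; lra. 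
Qed.


Definition dd g c s a0 k := snd (fst (state g c s a0 k)).
Definition ll g c s a0 k := snd (state g c s a0 k).
Definition PP g c s a0 k := (1-g)^2 * ll g c s a0 k * s + (1-(1-g)*dd g c s a0 k)^2*c^2.

Lemma unf g c s a0 k : let D := (1 - g) ^ 2 * ll g c s a0 k * s + (1 - (1 - g) * dd g c s a0 k) ^ 2 * c ^ 2 + s in
  let a := ((1 - g) * ll g c s a0 k * s + (1 - (1 - g) * dd g c s a0 k) ^ 2 * c ^ 2) / D in
  alpha g c s a0 (S k) = a /\ ll g c s a0 (S k) = a ^ 2 + (1 - (1 - g) * a) ^ 2 * ll g c s a0 k /\
  dd g c s a0 (S k) = a + (1 - (1 - g) * a) * dd g c s a0 k.
Proof. unfold alpha, ll, dd; simpl; destruct (state g c s a0 k) as [[x d] l]; simpl; auto. Qed.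


Definition kap g c s a0 := (1 - g^2) / (s + PP g c s a0 0).

Lemma PP0pos g c s a0 (Hg : 0 < g < 1) (Hs : 0 < s) (Ha0 : 0 < a0 <= 1) : 0 < PP g c s a0 0.
Proof. unfold PP, ll, dd; simpl.
 assert (0 < (1-g)^2 * (a0*a0)*s). { apply Rmult_lt_0_compat; [apply Rmult_lt_0_compat|]; try nra. }
 assert (0 <= (1 - (1 - g) * a0) ^ 2 * c ^ 2) by (apply Rmult_le_pos; apply pow2_ge_0). nra. Qed.

Lemma inv g c s a0 (Hg : 0 < g < 1) (Hs : 0 < s) (Ha0 : 0 < a0 <= 1) k : 0 <= ll g c s a0 k /\ 0 < PP g c s a0 k /\ PP g c s a0 k <= PP g c s a0 0 /\ / PP g c s a0 0 + INR k * kap g c s a0 <= / PP g c s a0 k.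
Proof.
  induction k as [|k [Hl [HP [HP0 HI]]]].
  - pose proof (PP0pos g c s a0 Hg Hs Ha0). simpl. unfold ll; simpl. repeat split; try lra. nra.
  - destruct (step_facts g c s (ll g c s a0 k) (dd g c s a0 k) Hg Hs Hl) as [Hl' [Hid [_ _]]].
    destruct (unf g c s a0 k) as [_ [E1 E2]].
    cbv zeta in Hid, E1, E2.
    assert (EP : PP g c s a0 (S k) = (1-g)^2*(ll g c s a0 (S k))*s + (1-(1-g)*dd g c s a0 (S k))^2*c^2) by reflexivity.
    rewrite <- E1, <- E2, <- EP in Hid. rewrite <- E1 in Hl'.
    fold (PP g c s a0 k) in Hid.
    set (Y := (1 - (1 - g) * dd g c s a0 k) ^ 2 * c ^ 2) in Hid.
    assert (HY : 0 <= Y) by (apply Rmult_le_pos; apply pow2_ge_0).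
    assert (HYP : Y <= PP g c s a0 k).
    { unfold PP. fold Y. assert (0 <= (1-g)^2 * ll g c s a0 k * s) by (apply Rmult_le_pos; [apply Rmult_le_pos; [apply pow2_ge_0|lra]|lra]). lra. }
    set (P := PP g c s a0 k) in *. set (P' := PP g c s a0 (S k)) in *.
    assert (HP' : 0 < P').
    { assert (0 < s * P) by nra. assert (0 <= g^2*Y^2) by nra.
      destruct (Rle_lt_dec P' 0); [|lra]. nra. }
    assert (HPP : P' * (s + P) <= P * (s + g^2 * P)).
    { rewrite Hid. assert (Y^2 <= P^2) by nra. assert (0 <= g^2) by nra. nra. }
    assert (Hg2P : g^2*P <= P) by (assert (g^2 <= 1) by nra; nra).
    assert (HPle : P' <= P).
    { assert (g^2*P <= P) by (assert (g^2 <= 1) by nra; nra). assert (P * (s + g^2*P) <= P * (s + P)) by (apply Rmult_le_compat_l; lra). apply (Rmult_le_reg_r (s+P)); lra. }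
    repeat split; try lra.
    assert (K1 : kap g c s a0 <= (1 - g^2) / (s + g^2 * P)).
    { unfold kap. unfold Rdiv. apply Rmult_le_compat_l; [nra|].
      assert (0 <= g^2*P) by nra. apply Rinv_le_contravar; lra. }
    assert (K2 : / P + (1 - g^2) / (s + g^2 * P) = / (P * (s + g^2 * P) / (s + P))).
    { field. split; nra. }
    assert (K3 : / (P * (s + g^2 * P) / (s + P)) <= / P').
    { apply Rinv_le_contravar; [lra|].
      apply (Rmult_le_reg_r (s+P)); [lra|]. unfold Rdiv. rewrite Rmult_assoc, Rinv_l by lra. lra. }
    rewrite S_INR. lra.
Qed.

Lemma alpha_bound g c s a0 (Hg : 0 < g < 1) (Hs : 0 < s) (Ha0 : 0 < a0 <= 1) k : 0 <= alpha g c s a0 (S k) /\ alpha g c s a0 (S k) * ((1-g)*s) <= PP g c s a0 k.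
Proof.
  destruct (inv g c s a0 Hg Hs Ha0 k) as [Hl _].
  destruct (step_facts g c s (ll g c s a0 k) (dd g c s a0 k) Hg Hs Hl) as [_ [_ [H1 H2]]].
  destruct (unf g c s a0 k) as [E _]. rewrite E. split; [exact H1|exact H2].
Qed.

Theorem theorem4 (g c s2 a0 : R) :
  0 < g < 1 -> 0 < s2 -> 0 < a0 <= 1 ->
  Un_cv (alpha g c s2 a0) 0.
Proof.
  intros Hg Hs Ha eps Heps.
  pose proof (PP0pos g c s2 a0 Hg Hs Ha) as HP0.
  assert (Hk : 0 < kap g c s2 a0). { unfold kap. apply Rdiv_lt_0_compat; nra. }
  set (k0 := kap g c s2 a0) in *.
  assert (Hb : 0 < (1-g)*s2*eps) by (apply Rmult_lt_0_compat; [apply Rmult_lt_0_compat|]; lra).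
  destruct (INR_archimed k0 (/ ((1-g)*s2*eps)) Hk) as [N HN].
  exists (S N). intros n Hn. destruct n as [|k]; [lia|].
  destruct (alpha_bound g c s2 a0 Hg Hs Ha k) as [A1 A2].
  destruct (inv g c s2 a0 Hg Hs Ha k) as [_ [HP [_ HI]]].
  fold k0 in HI.
  unfold R_dist. rewrite Rminus_0_r, Rabs_right by lra.
  assert (HkN : INR N <= INR k) by (apply le_INR; lia).
  assert (H1 : PP g c s2 a0 k * (INR k * k0) <= 1).
  { assert (PP g c s2 a0 k * (/ PP g c s2 a0 0 + INR k * k0) <= 1).
    { replace 1 with (PP g c s2 a0 k * / PP g c s2 a0 k) by (field; lra).
      apply Rmult_le_compat_l; lra. }
    assert (0 < PP g c s2 a0 k * / PP g c s2 a0 0) by (apply Rmult_lt_0_compat; [lra|apply Rinv_0_lt_compat; lra]).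
    nra. }
  assert (H2 : PP g c s2 a0 k * / ((1-g)*s2*eps) < 1).
  { assert (INR N * k0 <= INR k * k0) by nra. nra. }
  assert (H3 : PP g c s2 a0 k < (1-g)*s2*eps).
  { apply (Rmult_lt_reg_r (/ ((1-g)*s2*eps))). apply Rinv_0_lt_compat; lra.
    rewrite Rinv_r by lra. lra. }
  assert (0 < (1-g)*s2) by (apply Rmult_lt_0_compat; lra).
  nra.
Qed.
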